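(* Let $\gamma>1$, $\varepsilon>0$, $L>0$, $T>0$, $\Omega=(-L,L)$, and let $F_1,F_2,G_1,G_2$ be feasible growth functions. Let $n^{(1)}_{\gamma,\mathrm{init}},n^{(2)}_{\gamma,\mathrm{init}}\ge0$ be initial data supported in $\Omega$ and let $(n_{\gamma,\varepsilon}^{(1)},n_{\gamma,\varepsilon}^{(2)})$ solve the regularised problem on $Q_T=\Omega\times(0,T)$ (see context), with $n_{\gamma,\varepsilon}=n_{\gamma,\varepsilon}^{(1)}+n_{\gamma,\varepsilon}^{(2)}$. Let $R_\infty>0$ be an $L^\infty$ bound for $|R_{\gamma,\varepsilon}|$, where $R_{\gamma,\varepsilon}=c^{(1)}_{\gamma,\varepsilon}F(p_{\gamma,\varepsilon})+c^{(2)}_{\gamma,\varepsilon}G(p_{\gamma,\varepsilon})$. Then for $t\in(0,T]$, \[ n_{\gamma,\varepsilon}(t,x)\ \ge\ \underline n_\gamma(t):=2\varepsilon e^{-R_\infty t}>0 . \]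
   Context: Feasible growth functions: $F_1,F_2,G_1,G_2:[0,\infty)\to\mathbb{R}$ are $C^1$ with bounded derivatives; for all $p\ge0$, $F_1'(p)<0$, $G_2'(p)<0$, $F_2'(p)\le 0$, $G_1'(p)\le 0$; there exists $P_H>0$ such that for all $p\ge P_H$: $F_1(p)\le0$, $G_2(p)\le 0$, $F_2(p)=G_1(p)=0$; and $F(0)=G(0)$ with $F:=F_1+F_2$, $G:=G_1+G_2$. Regularised problem: $n^{(i)}_{\gamma,\varepsilon}$ solve on $Q_T$ $\partial_t n^{(1)}_{\gamma,\varepsilon}=\partial_x(n^{(1)}_{\gamma,\varepsilon}\partial_xp_{\gamma,\varepsilon})+n^{(1)}_{\gamma,\varepsilon}F_1(p_{\gamma,\varepsilon})+n^{(2)}_{\gamma,\varepsilon}G_1(p_{\gamma,\varepsilon})$, $\partial_t n^{(2)}_{\gamma,\varepsilon}=\partial_x(n^{(2)}_{\gamma,\varepsilon}\partial_xp_{\gamma,\varepsilon})+n^{(1)}_{\gamma,\varepsilon}F_2(p_{\gamma,\varepsilon})+n^{(2)}_{\gamma,\varepsilon}G_2(p_{\gamma,\varepsilon})$, with $p_{\gamma,\varepsilon}=n_{\gamma,\varepsilon}^\gamma$, initial data $n^{(i)}_{\gamma,\varepsilon}(0)=n^{(i)}_{\gamma,\mathrm{init}}+\varepsilon$, and homogeneous Neumann boundary conditions $\partial_x n_{\gamma,\varepsilon}(t,\pm L)=0$; the total density satisfies (in the strong sense) $\partial_t n_{\gamma,\varepsilon}-\frac{\gamma}{\gamma+1}\partial_x^2(n_{\gamma,\varepsilon}^{\gamma+1})=n_{\gamma,\varepsilon}R_{\gamma,\varepsilon}$.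 The fractions are $c^{(i)}_{\gamma,\varepsilon}=n^{(i)}_{\gamma,\varepsilon}/n_{\gamma,\varepsilon}$. *)

(* Defs.v *)
From Stdlib Require Import Reals.
From Coquelicot Require Import Coquelicot.
Open Scope R_scope.

(* x^a for x > 0; 0 otherwise (only used for nonnegative densities). *)
Definition rpow (x a : R) : R := if Rlt_dec 0 x then Rpower x a else 0.

(* derivative of f at x relative to the set D (one-sided at endpoints) *)
Definition deriv_within (D : R -> Prop) (f : R -> R) (x l : R) : Prop :=
  filterlim (fun y => (f y - f x) / (y - x))
    (within (fun y => D y /\ y <> x) (locally x)) (locally l).

Definition cont_within (D : R -> Prop) (f : R -> R) (x : R) : Prop :=
  filterlim f (within D (locally x)) (locally (f x)).

Definition nonneg (p : R) : Prop := 0 <= p.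

Definition C1_bdd_with (f f' : R -> R) : Prop :=
  (forall p, 0 <= p -> deriv_within nonneg f p (f' p)) /\
  (forall p, 0 <= p -> cont_within nonneg f' p) /\
  (exists M, forall p, 0 <= p -> Rabs (f' p) <= M).

Definition feasible (F1 F2 G1 G2 : R -> R) : Prop :=
  exists F1' F2' G1' G2' : R -> R,
    C1_bdd_with F1 F1' /\ C1_bdd_with F2 F2' /\
    C1_bdd_with G1 G1' /\ C1_bdd_with G2 G2' /\
    (forall p, 0 <= p -> F1' p < 0 /\ G2' p < 0 /\ F2' p <= 0 /\ G1' p <= 0) /\
    (exists PH, 0 < PH /\ forall p, PH <= p ->
        F1 p <= 0 /\ G2 p <= 0 /\ F2 p = 0 /\ G1 p = 0) /\
    F1 0 + F2 0 = G1 0 + G2 0.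

Definition ntot (n1 n2 : R -> R -> R) (t x : R) : R := n1 t x + n2 t x.

Definition pres (gamma : R) (n1 n2 : R -> R -> R) (t x : R) : R :=
  rpow (ntot n1 n2 t x) gamma.

(* R_{gamma,eps} = c1 F(p) + c2 G(p), c_i = n_i / n *)
Definition Rgrowth (gamma : R) (F1 F2 G1 G2 : R -> R) (n1 n2 : R -> R -> R)
    (t x : R) : R :=
  let p := pres gamma n1 n2 t x in
  (n1 t x / ntot n1 n2 t x) * (F1 p + F2 p)
  + (n2 t x / ntot n1 n2 t x) * (G1 p + G2 p).

(* Classical (strong) solution of the regularised problem on [0,T] x [-L,L]. *)
Definition reg_solution (gamma eps L T : R) (F1 F2 G1 G2 init1 init2 : R -> R)
    (n1 n2 : R -> R -> R) : Prop :=
  let Ix := fun x => -L <= x <= L in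
  let It := fun t => 0 <= t <= T in
  let p := pres gamma n1 n2 in
  (forall t x, It t -> Ix x ->
     filterlim (fun z : R * R => n1 (fst z) (snd z))
       (within (fun z : R * R => It (fst z) /\ Ix (snd z)) (locally (t, x)))
       (locally (n1 t x)) /\
     filterlim (fun z : R * R => n2 (fst z) (snd z))
       (within (fun z : R * R => It (fst z) /\ Ix (snd z)) (locally (t, x)))
       (locally (n2 t x))) /\
  (exists dt1 dt2 px fx1 fx2 : R -> R -> R,
     forall t x, 0 < t <= T -> Ix x ->
       deriv_within It (fun s => n1 s x) t (dt1 t x) /\
       deriv_within It (fun s => n2 s x) t (dt2 t x) /\
       deriv_within Ix (fun y => p t y) x (px t x) /\
       deriv_within Ix (fun y => n1 t y * px t y) x (fx1 t x) /\
       deriv_within Ix (fun y => n2 t y * px t y) x (fx2 t x) /\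
       dt1 t x = fx1 t x + n1 t x * F1 (p t x) + n2 t x * G1 (p t x) /\
       dt2 t x = fx2 t x + n1 t x * F2 (p t x) + n2 t x * G2 (p t x)) /\
  (forall x, Ix x -> n1 0 x = init1 x + eps /\ n2 0 x = init2 x + eps) /\
  (forall t, 0 < t <= T ->
     deriv_within Ix (fun y => ntot n1 n2 t y) (-L) 0 /\
     deriv_within Ix (fun y => ntot n1 n2 t y) L 0) /\
  (* total density equation, strong sense *)
  (exists dt q1 q2 : R -> R -> R,
     forall t x, 0 < t <= T -> Ix x ->
       deriv_within It (fun s => ntot n1 n2 s x) t (dt t x) /\
       deriv_within Ix (fun y => rpow (ntot n1 n2 t y) (gamma + 1)) x (q1 t x) /\
       deriv_within Ix (fun y => q1 t y) x (q2 t x) /\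
       dt t x = gamma / (gamma + 1) * q2 t x
                + ntot n1 n2 t x * Rgrowth gamma F1 F2 G1 G2 n1 n2 t x).

(* Main.v *)
Require Import Defs.
From Stdlib Require Import Reals.
From Coquelicot Require Import Coquelicot.
From Stdlib Require Import Lra Classical ClassicalEpsilon.
Open Scope R_scope.

Lemma ballR x e y : ball x e y <-> Rabs (y - x) < e.
Proof. unfold ball; simpl; unfold AbsRing_ball, abs, minus, plus, opp; simpl. tauto. Qed.

Lemma within_ed (D : R -> Prop) f x l :
  filterlim f (within D (locally x)) (locally l) ->
  forall eps, 0 < eps -> exists d, 0 < d /\
    forall y, D y -> Rabs (y - x) < d -> Rabs (f y - l) < eps.
Proof.
  intros H eps He.
  destruct (proj1 (filterlim_locally f l) H (mkposreal eps He)) as [d Hd].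
  exists d; split; [apply cond_pos|].
  intros y Dy Hy. apply ballR. apply Hd; [apply ballR|]; auto.
Qed.

Lemma ed_within (D : R -> Prop) f x l :
  (forall eps, 0 < eps -> exists d, 0 < d /\
    forall y, D y -> Rabs (y - x) < d -> Rabs (f y - l) < eps) ->
  filterlim f (within D (locally x)) (locally l).
Proof.
  intros H. apply filterlim_locally. intros [eps He].
  destruct (H eps He) as [d [Hd H']].
  exists (mkposreal d Hd). intros y Hy Dy. apply ballR. apply H'; auto.
  all: try (apply ballR; auto).
Qed.

Lemma within2_ed (D : R * R -> Prop) (g : R * R -> R) t x l :
  filterlim g (within D (locally (t, x))) (locally l) ->
  forall eps, 0 < eps -> exists d, 0 < d /\
    forall s y, D (s, y) -> Rabs (s - t) < d -> Rabs (y - x) < d ->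
      Rabs (g (s, y) - l) < eps.
Proof.
  intros H eps He.
  destruct (proj1 (filterlim_locally g l) H (mkposreal eps He)) as [d Hd].
  exists d; split; [apply cond_pos|].
  intros s y Dy Hs Hy. apply ballR. apply Hd; [split; apply ballR|]; auto.
Qed.

Lemma lim_ed_unique_le (D : R -> Prop) f x l c :
  filterlim f (within D (locally x)) (locally l) ->
  (forall d, 0 < d -> exists y, D y /\ Rabs (y - x) < d /\ f y <= c) ->
  l <= c.
Proof.
  intros H W. destruct (Rle_or_lt l c) as [h|h]; auto.
  destruct (within_ed D f x l H (l - c)) as [d [Hd H']]; [lra|].
  destruct (W d Hd) as [y [Dy [Hy Hf]]].
  specialize (H' y Dy Hy). apply Rabs_lt_between in H'. lra.
Qed.

Lemma lim_ed_unique_ge (D : R -> Prop) f x l c :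
  filterlim f (within D (locally x)) (locally l) ->
  (forall d, 0 < d -> exists y, D y /\ Rabs (y - x) < d /\ c <= f y) ->
  c <= l.
Proof.
  intros H W. destruct (Rle_or_lt c l) as [h|h]; auto.
  destruct (within_ed D f x l H (c - l)) as [d [Hd H']]; [lra|].
  destruct (W d Hd) as [y [Dy [Hy Hf]]].
  specialize (H' y Dy Hy). apply Rabs_lt_between in H'. lra.
Qed.

Lemma deriv_cont (D : R -> Prop) f x l :
  deriv_within D f x l ->
  forall eps, 0 < eps -> exists d, 0 < d /\
    forall y, D y -> Rabs (y - x) < d -> Rabs (f y - f x) < eps.
Proof.
  intros H eps He.
  destruct (within_ed _ _ _ _ H 1 Rlt_0_1) as [d [Hd H']].
  exists (Rmin d (eps / (Rabs l + 1))). split.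
  { apply Rmin_pos; auto. apply Rdiv_lt_0_compat; auto. pose proof (Rabs_pos l); lra. }
  intros y Dy Hy.
  destruct (Req_dec y x) as [->|hne].
  { replace (f x - f x) with 0 by ring. rewrite Rabs_R0; auto. }
  assert (Hq := H' y (conj Dy hne) (Rlt_le_trans _ _ _ Hy (Rmin_l _ _))).
  assert (Hy2 := Rlt_le_trans _ _ _ Hy (Rmin_r _ _)).
  replace (f y - f x) with (((f y - f x) / (y - x)) * (y - x)) by (field; lra).
  rewrite Rabs_mult.
  assert (Rabs ((f y - f x) / (y - x)) <= Rabs l + 1).
  { pose proof (Rabs_triang_inv ((f y - f x) / (y - x)) l). lra. }
  assert (0 < Rabs l + 1) by (pose proof (Rabs_pos l); lra).
  apply Rle_lt_trans with ((Rabs l + 1) * Rabs (y - x)).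
  { apply Rmult_le_compat_r; auto. apply Rabs_pos. }
  apply Rlt_le_trans with ((Rabs l + 1) * (eps / (Rabs l + 1))).
  { apply Rmult_lt_compat_l; auto. }
  right; field; lra.
Qed.

Lemma rpow_pos_eq a c : 0 < a -> rpow a c = Rpower a c.
Proof. intros h; unfold rpow; destruct (Rlt_dec 0 a); [auto|lra]. Qed.

Lemma rpow_ge0 a c : 0 <= rpow a c.
Proof. unfold rpow; destruct (Rlt_dec 0 a); [unfold Rpower; left; apply exp_pos|lra]. Qed.

Lemma rpow_mono a b c : 0 <= c -> 0 < b <= a -> rpow b c <= rpow a c.
Proof.
  intros hc hb. rewrite !rpow_pos_eq by lra. apply Rle_Rpower_l; lra.
Qed.

Lemma rpow_lip c b : 0 < b -> exists C r, 0 < r /\ 0 < C /\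
  forall a, Rabs (a - b) < r -> Rabs (rpow a c - rpow b c) <= C * Rabs (a - b).
Proof.
  intros hb. destruct (derivable_pt_lim_power b c hb 1 Rlt_0_1) as [d Hd].
  set (l := c * Rpower b (c - 1)) in *.
  exists (Rabs l + 1), (Rmin d (b / 2)). split; [apply Rmin_pos; [apply cond_pos|lra]|].
  split; [pose proof (Rabs_pos l); lra|].
  intros a Ha.
  assert (Ha1 := Rlt_le_trans _ _ _ Ha (Rmin_l _ _)).
  assert (Ha2 := Rlt_le_trans _ _ _ Ha (Rmin_r _ _)).
  assert (0 < a) by (apply Rabs_lt_between in Ha2; lra).
  rewrite !rpow_pos_eq by lra.
  destruct (Req_dec a b) as [->|hne].
  { replace (Rpower b c - Rpower b c) with 0 by ring. rewrite Rabs_R0.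
    replace (b - b) with 0 by ring. rewrite Rabs_R0; lra. }
  assert (hh : a - b <> 0) by lra.
  specialize (Hd (a - b) hh Ha1). replace (b + (a - b)) with a in Hd by ring.
  replace (Rpower a c - Rpower b c) with (((Rpower a c - Rpower b c) / (a - b)) * (a - b)) by (field; lra).
  rewrite Rabs_mult. apply Rmult_le_compat_r; [apply Rabs_pos|].
  pose proof (Rabs_triang_inv ((Rpower a c - Rpower b c) / (a - b)) l). lra.
Qed.

Lemma rpow_cont c b : 0 < b -> filterlim (fun a => rpow a c) (locally b) (locally (rpow b c)).
Proof.
  intros hb. destruct (rpow_lip c b hb) as [C [r [hr [hC H]]]].
  apply filterlim_locally. intros [eps he].
  exists (mkposreal (Rmin r (eps / C)) (Rmin_pos _ _ hr (Rdiv_lt_0_compat _ _ he hC))).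
  intros a Ha. apply ballR in Ha. simpl in Ha. apply ballR. simpl.
  assert (Ha1 := Rlt_le_trans _ _ _ Ha (Rmin_l _ _)).
  assert (Ha2 := Rlt_le_trans _ _ _ Ha (Rmin_r _ _)).
  eapply Rle_lt_trans; [apply H; auto|].
  apply Rlt_le_trans with (C * (eps / C)); [apply Rmult_lt_compat_l; auto|].
  right; field; lra.
Qed.

Lemma filterlim_into_within {T} (F : (T -> Prop) -> Prop) {FF : Filter F}
  (f : T -> R) (D : R -> Prop) l :
  filterlim f F (locally l) -> (forall y, D (f y)) -> filterlim f F (within D (locally l)).
Proof.
  intros H hD P HP. unfold filtermap. specialize (H (fun z => D z -> P z) HP).
  unfold filtermap in H. eapply filter_imp; [|exact H]. simpl. auto.
Qed.

Lemma interior_near L x0 : 0 < L -> -L <= x0 <= L -> forall d, 0 < d ->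
  exists y, -L < y < L /\ Rabs (y - x0) < d /\ y <> x0.
Proof.
  intros hL hx d hd. destruct (Rlt_or_le x0 L) as [h|h].
  - exists (x0 + Rmin d (L - x0) / 2).
    assert (0 < Rmin d (L - x0)) by (apply Rmin_pos; lra).
    pose proof (Rmin_l d (L - x0)); pose proof (Rmin_r d (L - x0)).
    split; [lra|]. split; [|lra]. rewrite Rabs_right; lra.
  - exists (x0 - Rmin d L / 2).
    assert (0 < Rmin d L) by (apply Rmin_pos; lra).
    pose proof (Rmin_l d L); pose proof (Rmin_r d L).
    split; [lra|]. split; [|lra]. rewrite Rabs_left; lra.
Qed.

Lemma flim_plus {T} (F : (T -> Prop) -> Prop) {FF : Filter F} (f g : T -> R) a b :
  filterlim f F (locally a) -> filterlim g F (locally b) ->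
  filterlim (fun y => f y + g y) F (locally (a + b)).
Proof. intros ha hb. exact (filterlim_comp_2 f g Rplus ha hb (filterlim_plus a b)). Qed.

Lemma flim_mult {T} (F : (T -> Prop) -> Prop) {FF : Filter F} (f g : T -> R) a b :
  filterlim f F (locally a) -> filterlim g F (locally b) ->
  filterlim (fun y => f y * g y) F (locally (a * b)).
Proof. intros ha hb. exact (filterlim_comp_2 f g Rmult ha hb (filterlim_mult a b)). Qed.

Lemma flim_inv {T} (F : (T -> Prop) -> Prop) {FF : Filter F} (f : T -> R) a :
  a <> 0 -> filterlim f F (locally a) -> filterlim (fun y => / f y) F (locally (/ a)).
Proof.
  intros h ha. eapply filterlim_comp; [exact ha|].
  apply (filterlim_Rbar_inv (Finite a)). intro e. apply h. injection e; auto.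
Qed.

Lemma cont_comp {T} (F : (T -> Prop) -> Prop) {FF : Filter F} (f : T -> R) (G : R -> R) a :
  filterlim f F (locally a) -> (forall y, 0 <= f y) -> cont_within Defs.nonneg G a ->
  filterlim (fun y => G (f y)) F (locally (G a)).
Proof.
  intros ha hp hG. eapply filterlim_comp; [|exact hG].
  apply filterlim_into_within; auto.
Qed.

Lemma R_bound_closure gamma (F1 F2 G1 G2 u v : R -> R) L Rinf x0 :
  0 < L -> -L <= x0 <= L ->
  filterlim u (within (fun y => -L <= y <= L) (locally x0)) (locally (u x0)) ->
  filterlim v (within (fun y => -L <= y <= L) (locally x0)) (locally (v x0)) ->
  0 < u x0 + v x0 ->
  (forall p, 0 <= p -> cont_within Defs.nonneg F1 p) ->
  (forall p, 0 <= p -> cont_within Defs.nonneg F2 p) ->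
  (forall p, 0 <= p -> cont_within Defs.nonneg G1 p) ->
  (forall p, 0 <= p -> cont_within Defs.nonneg G2 p) ->
  (forall y, -L < y < L -> Rabs (u y / (u y + v y) * (F1 (rpow (u y + v y) gamma) + F2 (rpow (u y + v y) gamma))
       + v y / (u y + v y) * (G1 (rpow (u y + v y) gamma) + G2 (rpow (u y + v y) gamma))) <= Rinf) ->
  Rabs (u x0 / (u x0 + v x0) * (F1 (rpow (u x0 + v x0) gamma) + F2 (rpow (u x0 + v x0) gamma))
       + v x0 / (u x0 + v x0) * (G1 (rpow (u x0 + v x0) gamma) + G2 (rpow (u x0 + v x0) gamma))) <= Rinf.
Proof.
  intros hL hx hu hv hN c1 c2 c3 c4 hb.
  set (W := within (fun y => -L <= y <= L) (locally x0)).
  assert (hN' := flim_plus W u v _ _ hu hv).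
  assert (hp : filterlim (fun y => rpow (u y + v y) gamma) W (locally (rpow (u x0 + v x0) gamma))).
  { exact (filterlim_comp _ _ _ _ _ _ _ _ hN' (rpow_cont gamma _ hN)). }
  assert (hp0 : 0 <= rpow (u x0 + v x0) gamma) by apply rpow_ge0.
  assert (hI := flim_inv W _ _ (Rgt_not_eq _ _ hN) hN').
  assert (hF := flim_plus W _ _ _ _ (cont_comp W _ F1 _ hp (fun y => rpow_ge0 _ _) (c1 _ hp0))
                                    (cont_comp W _ F2 _ hp (fun y => rpow_ge0 _ _) (c2 _ hp0))).
  assert (hG := flim_plus W _ _ _ _ (cont_comp W _ G1 _ hp (fun y => rpow_ge0 _ _) (c3 _ hp0))
                                    (cont_comp W _ G2 _ hp (fun y => rpow_ge0 _ _) (c4 _ hp0))).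
  assert (hall := flim_plus W _ _ _ _ (flim_mult W _ _ _ _ (flim_mult W _ _ _ _ hu hI) hF)
                                      (flim_mult W _ _ _ _ (flim_mult W _ _ _ _ hv hI) hG)).
  simpl in hall. unfold Rdiv.
  apply Rabs_le. split.
  - eapply lim_ed_unique_ge; [exact hall|].
    intros d hd. destruct (interior_near L x0 hL hx d hd) as [y [hy [hyd _]]].
    exists y. split; [lra|]. split; auto. specialize (hb y hy). apply Rabs_le_between in hb.
    unfold Rdiv in hb. lra.
  - eapply lim_ed_unique_le; [exact hall|].
    intros d hd. destruct (interior_near L x0 hL hx d hd) as [y [hy [hyd _]]].
    exists y. split; [lra|]. split; auto. specialize (hb y hy). apply Rabs_le_between in hb.
    unfold Rdiv in hb. lra.
Qed.

Lemma deriv_interior L f z l : -L < z < L ->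
  deriv_within (fun y => -L <= y <= L) f z l -> is_derive f z l.
Proof.
  intros hz H. apply is_derive_Reals. intros eps he.
  destruct (within_ed _ _ _ _ H eps he) as [d [hd H']].
  assert (0 < Rmin d (Rmin (z + L) (L - z))) by (repeat apply Rmin_pos; lra).
  exists (mkposreal _ H0). intros h hh hlt. simpl in hlt.
  pose proof (Rmin_l d (Rmin (z + L) (L - z))).
  pose proof (Rmin_r d (Rmin (z + L) (L - z))).
  pose proof (Rmin_l (z + L) (L - z)). pose proof (Rmin_r (z + L) (L - z)).
  apply Rabs_lt_between in hlt as hb.
  specialize (H' (z + h)). replace (z + h - z) with h in H' by ring.
  apply H'; [split; [lra|lra]|lra].
Qed.

Lemma mvt_sign (f df : R -> R) a b : a < b -> (forall z, a <= z <= b -> is_derive f z (df z)) ->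
  ((forall z, a <= z <= b -> df z < 0) -> f b < f a) /\
  ((forall z, a <= z <= b -> 0 < df z) -> f a < f b).
Proof.
  intros hab hd.
  destruct (MVT_gen f a b df) as [c [hc he]].
  { intros x hx. apply hd. rewrite Rmin_left, Rmax_right in hx; lra. }
  { intros x hx. rewrite Rmin_left, Rmax_right in hx by lra.
    apply continuity_pt_filterlim. apply (ex_derive_continuous (K:=R_AbsRing) (V:=R_NormedModule) f x). exists (df x). apply hd; lra. }
  rewrite Rmin_left, Rmax_right in hc by lra.
  split; intros hs; specialize (hs c hc).
  - assert (df c * (b - a) < 0) by (apply Rmult_neg_pos; lra). lra.
  - assert (0 < df c * (b - a)) by (apply Rmult_lt_0_compat; lra). lra.
Qed.

Lemma qle0 a b : 0 <= a -> b < 0 -> a / b <= 0.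
Proof. intros. unfold Rdiv. pose proof (Rinv_lt_0_compat b H0). nra. Qed.
Lemma qge0 a b : 0 <= a -> 0 < b -> 0 <= a / b.
Proof. intros. unfold Rdiv. pose proof (Rinv_0_lt_compat b H0). nra. Qed.

Lemma deriv_min_interior L f x l : -L < x < L ->
  deriv_within (fun y => -L <= y <= L) f x l ->
  (forall y, -L <= y <= L -> f x <= f y) -> l = 0.
Proof.
  intros hx H hm. apply Rle_antisym.
  - eapply lim_ed_unique_le; [exact H|].
    intros d hd. exists (x - Rmin d (x + L) / 2).
    assert (0 < Rmin d (x + L)) by (apply Rmin_pos; lra).
    pose proof (Rmin_l d (x + L)); pose proof (Rmin_r d (x + L)).
    split; [split; lra|]. split; [rewrite Rabs_left; lra|].
    assert (f x <= f (x - Rmin d (x + L) / 2)) by (apply hm; lra).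
    apply qle0; lra.
  - eapply lim_ed_unique_ge; [exact H|].
    intros d hd. exists (x + Rmin d (L - x) / 2).
    assert (0 < Rmin d (L - x)) by (apply Rmin_pos; lra).
    pose proof (Rmin_l d (L - x)); pose proof (Rmin_r d (L - x)).
    split; [split; lra|]. split; [rewrite Rabs_right; lra|].
    assert (f x <= f (x + Rmin d (L - x) / 2)) by (apply hm; lra).
    apply qge0; lra.
Qed.

Lemma neumann_zero L (N : R -> R) c xb l : 0 < L -> -L <= xb <= L -> 0 < N xb ->
  deriv_within (fun y => -L <= y <= L) N xb 0 ->
  deriv_within (fun y => -L <= y <= L) (fun y => rpow (N y) c) xb l -> l = 0.
Proof.
  intros hL hx hN hn hf.
  assert (key : forall eps, 0 < eps -> Rabs l <= eps).
  { intros eps he.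
    destruct (rpow_lip c (N xb) hN) as [C [r [hr [hC Hl]]]].
    destruct (deriv_cont _ _ _ _ hn r hr) as [d1 [hd1 H1]].
    destruct (within_ed _ _ _ _ hn (eps / C)) as [d2 [hd2 H2]].
    { apply Rdiv_lt_0_compat; auto. }
    assert (W : forall d, 0 < d -> exists y, (-L <= y <= L /\ y <> xb) /\ Rabs (y - xb) < d /\
        Rabs ((rpow (N y) c - rpow (N xb) c) / (y - xb)) <= eps).
    { intros d hd.
      assert (0 < Rmin d (Rmin d1 d2)) by (repeat apply Rmin_pos; auto).
      destruct (interior_near L xb hL hx _ H) as [y [hy [hyd hne]]].
      pose proof (Rmin_l d (Rmin d1 d2)). pose proof (Rmin_r d (Rmin d1 d2)).
      pose proof (Rmin_l d1 d2). pose proof (Rmin_r d1 d2).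
      exists y. split; [split; [lra|auto]|]. split; [lra|].
      assert (hIy : -L <= y <= L) by lra.
      assert (hyd1 : Rabs (y - xb) < d1) by lra.
      assert (hyd2 : Rabs (y - xb) < d2) by lra.
      assert (h1 := H1 y hIy hyd1).
      assert (h2 := H2 y (conj hIy hne) hyd2).
      rewrite Rminus_0_r in h2.
      assert (hy0 : 0 < Rabs (y - xb)) by (apply Rabs_pos_lt; lra).
      rewrite Rabs_div by lra. rewrite Rabs_div in h2 by lra.
      apply Rle_trans with (C * Rabs (N y - N xb) / Rabs (y - xb)).
      { unfold Rdiv. apply Rmult_le_compat_r; [left; apply Rinv_0_lt_compat; auto|]. apply Hl; auto. }
      replace (C * Rabs (N y - N xb) / Rabs (y - xb)) with (C * (Rabs (N y - N xb) / Rabs (y - xb))) by (field; lra).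
      apply Rle_trans with (C * (eps / C)); [apply Rmult_le_compat_l; lra|].
      right; field; lra. }
    apply Rabs_le. split.
    - eapply lim_ed_unique_ge; [exact hf|].
      intros d hd. destruct (W d hd) as [y [hy [hyd hq]]]. exists y. split; auto. split; auto.
      apply Rabs_le_between in hq. lra.
    - eapply lim_ed_unique_le; [exact hf|].
      intros d hd. destruct (W d hd) as [y [hy [hyd hq]]]. exists y. split; auto. split; auto.
      apply Rabs_le_between in hq. lra. }
  destruct (Req_dec l 0) as [|hne]; auto.
  assert (0 < Rabs l) by (apply Rabs_pos_lt; auto).
  specialize (key (Rabs l / 2) ltac:(lra)). lra.
Qed.

Lemma spatial_q2 L (N q1 : R -> R) c x0 q2 :
  0 < L -> -L <= x0 <= L -> 0 < c -> 0 < N x0 ->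
  (forall y, -L <= y <= L -> N x0 <= N y) ->
  (forall y, -L <= y <= L -> deriv_within (fun y => -L <= y <= L) (fun y => rpow (N y) c) y (q1 y)) ->
  deriv_within (fun y => -L <= y <= L) q1 x0 q2 ->
  deriv_within (fun y => -L <= y <= L) N (-L) 0 ->
  deriv_within (fun y => -L <= y <= L) N L 0 ->
  0 <= q2.
Proof.
  intros hL hx hc hN hmin hq1 hq2 hnl hnr.
  set (f := fun y => rpow (N y) c) in *.
  assert (hm : forall y, -L <= y <= L -> f x0 <= f y).
  { intros y hy. unfold f. apply rpow_mono; [lra|]. split; auto. }
  assert (hq0 : q1 x0 = 0).
  { destruct (Req_dec x0 (-L)) as [e|ne].
    - rewrite e in *. eapply (neumann_zero L N c (-L)); eauto.
    - destruct (Req_dec x0 L) as [e|ne2].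
      + rewrite e in *. eapply (neumann_zero L N c L); eauto.
      + eapply (deriv_min_interior L f x0); [lra| |exact hm]. apply hq1; lra. }
  destruct (Rle_or_lt 0 q2) as [|hneg]; auto. exfalso.
  destruct (within_ed _ _ _ _ hq2 (- q2 / 2)) as [d [hd Hd]]; [lra|].
  assert (hQ : forall y, -L <= y <= L -> y <> x0 -> Rabs (y - x0) < d -> q1 y / (y - x0) < q2 / 2).
  { intros y hy hne hyd. specialize (Hd y (conj hy hne) hyd). rewrite hq0, Rminus_0_r in Hd.
    apply Rabs_lt_between in Hd. lra. }
  assert (hfc := deriv_cont _ _ _ _ (hq1 x0 hx)).
  destruct (Rlt_or_le x0 L) as [hlt|hge].
  - set (h := Rmin d (L - x0)).
    assert (hh : 0 < h) by (apply Rmin_pos; lra).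
    assert (hh1 : h <= d) by apply Rmin_l. assert (hh2 : h <= L - x0) by apply Rmin_r.
    assert (hneg1 : forall z, x0 < z < x0 + h -> q1 z < 0).
    { intros z hz. assert (hq := hQ z ltac:(lra) ltac:(lra) ltac:(rewrite Rabs_right; lra)).
      replace (q1 z) with (q1 z / (z - x0) * (z - x0)) by (field; lra).
      apply Rmult_neg_pos; lra. }
    assert (hder : forall a b, x0 < a -> a < b -> b < x0 + h -> f b < f a).
    { intros a b ha hab hb. apply (mvt_sign f q1 a b hab).
      - intros z hz. apply (deriv_interior L); [lra|]. apply hq1; lra.
      - intros z hz. apply hneg1; lra. }
    set (ym := x0 + h / 2). set (yb := x0 + 3 * h / 4).
    assert (f ym <= f x0).
    { destruct (Rle_or_lt (f ym) (f x0)) as [|hc2]; auto. exfalso.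
      destruct (hfc (f ym - f x0)) as [de [hde Hde]]; [lra|].
      set (ya := x0 + Rmin de (h / 2) / 2).
      assert (0 < Rmin de (h / 2)) by (apply Rmin_pos; lra).
      pose proof (Rmin_l de (h / 2)); pose proof (Rmin_r de (h / 2)).
      assert (h1 := Hde ya ltac:(unfold ya; lra) ltac:(unfold ya; rewrite Rabs_right; lra)).
      apply Rabs_lt_between in h1.
      assert (f ym < f ya) by (apply hder; unfold ya, ym; lra). lra. }
    assert (f yb < f ym) by (apply hder; unfold yb, ym; lra).
    assert (f x0 <= f yb) by (apply hm; unfold yb; lra). lra.
  - assert (e : x0 = L) by lra. rewrite e in *.
    set (h := Rmin d (2 * L)).
    assert (hh : 0 < h) by (apply Rmin_pos; lra).
    assert (hh1 : h <= d) by apply Rmin_l. assert (hh2 : h <= 2 * L) by apply Rmin_r.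
    assert (hpos1 : forall z, L - h < z < L -> 0 < q1 z).
    { intros z hz. assert (hq := hQ z ltac:(lra) ltac:(lra) ltac:(rewrite Rabs_left; lra)).
      replace (q1 z) with (q1 z / (z - L) * (z - L)) by (field; lra).
      apply Rmult_neg_neg; lra. }
    assert (hder : forall a b, L - h < a -> a < b -> b < L -> f a < f b).
    { intros a b ha hab hb. apply (mvt_sign f q1 a b hab).
      - intros z hz. apply (deriv_interior L); [lra|]. apply hq1; lra.
      - intros z hz. apply hpos1; lra. }
    set (ym := L - h / 2). set (ya := L - 3 * h / 4).
    assert (f ym <= f L).
    { destruct (Rle_or_lt (f ym) (f L)) as [|hc2]; auto. exfalso.
      destruct (hfc (f ym - f L)) as [de [hde Hde]]; [lra|].
      set (yb := L - Rmin de (h / 2) / 2).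
      assert (0 < Rmin de (h / 2)) by (apply Rmin_pos; lra).
      pose proof (Rmin_l de (h / 2)); pose proof (Rmin_r de (h / 2)).
      assert (h1 := Hde yb ltac:(unfold yb; lra) ltac:(unfold yb; rewrite Rabs_left; lra)).
      apply Rabs_lt_between in h1.
      assert (f ym < f yb) by (apply hder; unfold yb, ym; lra). lra. }
    assert (f ya < f ym) by (apply hder; unfold ya, ym; lra).
    assert (f L <= f ya) by (apply hm; unfold ya; lra). lra.
Qed.

Lemma exp_mono x y : x <= y -> exp x <= exp y.
Proof. intros [h|h]; [left; apply exp_increasing; auto|subst; lra]. Qed.

Lemma ext_step (N : R -> R -> R) L T (b : R -> R) s :
  0 < L -> 0 <= s <= T ->
  (forall s1 s2, s1 <= s2 -> b s2 <= b s1) ->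
  (forall t x, 0 <= t <= T -> -L <= x <= L -> forall eps, 0 < eps -> exists d, 0 < d /\
     forall s y, 0 <= s <= T -> -L <= y <= L -> Rabs (s - t) < d -> Rabs (y - x) < d ->
     Rabs (N s y - N t x) < eps) ->
  (forall x, -L <= x <= L -> b s < N s x) ->
  exists d, 0 < d /\ forall s', s <= s' <= s + d -> s' <= T ->
     forall x, -L <= x <= L -> b s' < N s' x.
Proof.
  intros hL hs hb HC Hpos.
  assert (Hx : forall x, exists dd : posreal, -L <= x <= L ->
     forall s' y, 0 <= s' <= T -> -L <= y <= L -> Rabs (s' - s) < dd -> Rabs (y - x) < dd ->
       b s < N s' y).
  { intros x. destruct (classic (-L <= x <= L)) as [hx|hx].
    - destruct (HC s x hs hx ((N s x - b s) / 2)) as [d [hd Hd]].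
      { specialize (Hpos x hx). lra. }
      exists (mkposreal d hd). intros _ s' y hs' hy h1 h2. simpl in *.
      specialize (Hd s' y hs' hy h1 h2). apply Rabs_lt_between in Hd.
      specialize (Hpos x hx). lra.
    - exists (mkposreal 1 Rlt_0_1). intros hx'. contradiction. }
  set (delta := fun x => proj1_sig (constructive_indefinite_description _ (Hx x))).
  assert (Hdelta : forall x, -L <= x <= L ->
     forall s' y, 0 <= s' <= T -> -L <= y <= L -> Rabs (s' - s) < delta x -> Rabs (y - x) < delta x ->
       b s < N s' y).
  { intros x. unfold delta. destruct (constructive_indefinite_description _ (Hx x)) as [dd Hdd].
    simpl. exact Hdd. }
  destruct (compactness_value_1d (-L) L delta) as [d Hd].
  exists (d / 2). split; [pose proof (cond_pos d); lra|].
  intros s' hs' hs'T y hy.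
  apply NNPP. intro hcon. apply (Hd y hy). intros [x [hx [hxy hdx]]].
  apply hcon. apply Rle_lt_trans with (b s); [apply hb; lra|].
  apply (Hdelta x hx s' y); [lra|auto| |].
  - rewrite Rabs_right by lra. pose proof (cond_pos d). lra.
  - exact hxy.
Qed.

Lemma main_abstract (N : R -> R -> R) L T Rinf k c eps t1 :
  0 < L -> 0 < Rinf -> Rinf < k -> 0 < c < 2 * eps -> 0 < t1 < T ->
  (forall t x, 0 <= t <= T -> -L <= x <= L -> forall e, 0 < e -> exists d, 0 < d /\
     forall s y, 0 <= s <= T -> -L <= y <= L -> Rabs (s - t) < d -> Rabs (y - x) < d ->
     Rabs (N s y - N t x) < e) ->
  (forall x, -L <= x <= L -> 2 * eps <= N 0 x) ->
  (forall tau x0, 0 < tau <= t1 -> -L <= x0 <= L -> 0 < N tau x0 ->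
     (forall y, -L <= y <= L -> N tau x0 <= N tau y) ->
     exists dt, deriv_within (fun t => 0 <= t <= T) (fun s => N s x0) tau dt /\
       - Rinf * N tau x0 <= dt) ->
  forall s x, 0 <= s <= t1 -> -L <= x <= L -> c * exp (- k * s) < N s x.
Proof.
  intros hL hR hk hc ht1 HC HI HD.
  set (b := fun s => c * exp (- k * s)).
  assert (hbpos : forall s, 0 < b s).
  { intros s. unfold b. pose proof (exp_pos (- k * s)). nra. }
  assert (hbm : forall s1 s2, s1 <= s2 -> b s2 <= b s1).
  { intros s1 s2 h. unfold b. apply Rmult_le_compat_l; [lra|]. apply exp_mono. nra. }
  set (P := fun s => forall s', 0 <= s' <= s -> forall x, -L <= x <= L -> b s' < N s' x).
  set (E := fun s => 0 <= s <= t1 /\ P s).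
  assert (hP0 : P 0).
  { intros s' hs' x hx. assert (s' = 0) by lra. subst s'.
    specialize (HI x hx). unfold b. rewrite Rmult_0_r, exp_0. lra. }
  assert (hbound : bound E) by (exists t1; intros s [hs _]; lra).
  assert (hne : exists s, E s) by (exists 0; split; [lra|auto]).
  destruct (completeness E hbound hne) as [tau [hub hlub]].
  assert (htau1 : tau <= t1) by (apply hlub; intros s [hs _]; lra).
  assert (Claim1 : forall s, 0 <= s < tau -> forall x, -L <= x <= L -> b s < N s x).
  { intros s hs x hx. apply NNPP. intro hcon.
    assert (tau <= s).
    { apply hlub. intros e [he hPe]. destruct (Rle_or_lt e s) as [|hlt]; auto.
      exfalso. apply hcon. apply hPe; auto. lra. }
    lra. }
  assert (htau0 : 0 < tau).
  { destruct (ext_step N L T b 0 hL ltac:(lra) hbm HC) as [d [hd Hd]].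
    { intros x hx. apply hP0; auto. lra. }
    assert (E (Rmin d t1)).
    { split. { pose proof (Rmin_r d t1). pose proof (Rmin_pos d t1 hd ltac:(lra)). lra. }
      intros s' hs' x hx. destruct (Req_dec s' 0) as [->|hs0].
      - apply hP0; auto; lra.
      - pose proof (Rmin_l d t1). pose proof (Rmin_r d t1).
        apply Hd; auto; lra. }
    pose proof (hub _ H). pose proof (Rmin_pos d t1 hd ltac:(lra)). lra. }
  assert (Claim2 : forall x, -L <= x <= L -> b tau <= N tau x).
  { intros x hx. destruct (Rle_or_lt (b tau) (N tau x)) as [|hlt]; auto. exfalso.
    destruct (HC tau x ltac:(lra) hx (b tau - N tau x)) as [d [hd Hd]]; [lra|].
    set (s := tau - Rmin d tau / 2).
    assert (0 < Rmin d tau) by (apply Rmin_pos; lra).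
    pose proof (Rmin_l d tau). pose proof (Rmin_r d tau).
    assert (h1 := Hd s x ltac:(unfold s; lra) hx ltac:(unfold s; rewrite Rabs_left; lra)
                     ltac:(replace (x - x) with 0 by ring; rewrite Rabs_R0; lra)).
    apply Rabs_lt_between in h1.
    assert (h2 := Claim1 s ltac:(unfold s; lra) x hx).
    assert (h3 := hbm s tau ltac:(unfold s; lra)). lra. }
  destruct (classic (exists x0, -L <= x0 <= L /\ N tau x0 <= b tau)) as [[x0 [hx0 hle]]|hnot].
  -
    exfalso.
    assert (heq : N tau x0 = b tau) by (specialize (Claim2 x0 hx0); lra).
    destruct (HD tau x0 ltac:(lra) hx0 ltac:(rewrite heq; auto)) as [dt [hdt hdtb]].
    { intros y hy. rewrite heq. apply Claim2; auto. }
    set (g := (k - Rinf) * b tau / 2).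
    assert (hg : 0 < g) by (unfold g; pose proof (hbpos tau); nra).
    destruct (within_ed _ _ _ _ hdt g hg) as [d [hd Hd]].
    set (s := tau - Rmin d tau / 2).
    assert (0 < Rmin d tau) by (apply Rmin_pos; lra).
    pose proof (Rmin_l d tau). pose proof (Rmin_r d tau).
    assert (hsI : (0 <= s <= T) /\ s <> tau) by (unfold s; split; lra).
    assert (h1 := Hd s hsI ltac:(unfold s; rewrite Rabs_left; lra)).
    apply Rabs_lt_between in h1.
    assert (h2 := Claim1 s ltac:(unfold s; lra) x0 hx0).
    (* convexity *)
    assert (hconv : b s - b tau >= - k * b tau * (s - tau)).
    { unfold b. replace (- k * s) with (- k * tau + (- k * (s - tau))) by ring.
      rewrite exp_plus. pose proof (exp_ineq1_le (- k * (s - tau))).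
      pose proof (exp_pos (- k * tau)).
      assert (0 <= c * exp (- k * tau) * (exp (- k * (s - tau)) - 1 + k * (s - tau))).
      { apply Rmult_le_pos; [nra|lra]. }
      nra. }
    assert (hq : (N s x0 - N tau x0) / (s - tau) < - k * b tau).
    { assert (hw : s - tau < 0) by (unfold s; lra).
      assert (hnum : 0 < (N s x0 - N tau x0) - (- k * b tau) * (s - tau)) by lra.
      assert (hd0 := Rdiv_pos_neg _ _ hnum hw).
      replace ((N s x0 - N tau x0 - - k * b tau * (s - tau)) / (s - tau))
        with ((N s x0 - N tau x0) / (s - tau) - - k * b tau) in hd0 by (field; lra).
      lra. }
    rewrite heq in hdtb. unfold g in h1. lra.
  -
    assert (hPtau : P tau).
    { intros s' hs' x hx. destruct (Req_dec s' tau) as [->|hne'].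
      - destruct (Rle_or_lt (N tau x) (b tau)) as [hle|]; auto.
        exfalso. apply hnot. exists x. auto.
      - apply Claim1; auto. lra. }
    destruct (Req_dec tau t1) as [e|hne'].
    + intros s x hs hx. apply (hPtau s); auto. lra.
    + exfalso.
      destruct (ext_step N L T b tau hL ltac:(lra) hbm HC) as [d [hd Hd]].
      { intros x hx. apply hPtau; auto. lra. }
      set (s2 := Rmin (tau + d) t1).
      assert (hs2 : tau < s2) by (unfold s2; apply Rmin_glb_lt; lra).
      assert (E s2).
      { split. { pose proof (Rmin_r (tau + d) t1). unfold s2 in *. lra. }
        intros s' hs' x hx. destruct (Rle_or_lt s' tau).
        - apply hPtau; auto; lra.
        - pose proof (Rmin_l (tau + d) t1). pose proof (Rmin_r (tau + d) t1).
          unfold s2 in *. apply Hd; auto; lra. }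
      pose proof (hub _ H). lra.
Qed.

Lemma lim_kc eps Rinf t n : 0 < eps -> 0 < Rinf -> 0 < t ->
  (forall k c, Rinf < k -> 0 < c < 2 * eps -> c * exp (- k * t) < n) ->
  2 * eps * exp (- Rinf * t) <= n.
Proof.
  intros he hR ht H.
  set (Ee := exp (- Rinf * t)). set (B := 2 * eps * Ee).
  destruct (Rle_or_lt B n) as [|hlt]; auto. exfalso.
  set (g := B - n).
  assert (hE0 : 0 < Ee) by apply exp_pos.
  assert (hE1 : Ee <= 1) by (unfold Ee; rewrite <- exp_0; apply exp_mono; nra).
  assert (hB : 0 < B) by (unfold B; nra).
  set (eta := g / (2 * (B * t + 1))).
  assert (heta : 0 < eta) by (unfold eta, g; apply Rdiv_lt_0_compat; nra).
  set (dl := Rmin eps (g / 4)).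
  assert (hdl : 0 < dl) by (unfold dl; apply Rmin_pos; unfold g; lra).
  pose proof (Rmin_l eps (g / 4)). pose proof (Rmin_r eps (g / 4)).
  specialize (H (Rinf + eta) (2 * eps - dl) ltac:(lra) ltac:(unfold dl in *; lra)).
  replace (- (Rinf + eta) * t) with (- Rinf * t + (- eta * t)) in H by ring.
  rewrite exp_plus in H. fold Ee in H.
  pose proof (exp_ineq1_le (- eta * t)).
  assert (hBt : B * eta * t <= g / 2).
  { unfold eta. replace (B * (g / (2 * (B * t + 1))) * t) with (g / 2 * (B * t / (B * t + 1))) by (field; nra).
    assert (B * t / (B * t + 1) <= 1).
    { assert (hpos : 0 < B * t + 1) by nra. apply (proj1 (Rcomplements.Rdiv_le_1 (B * t) _ hpos)); lra. }
    assert (0 < g) by (unfold g; lra).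
    rewrite <- (Rmult_1_r (g / 2)) at 2. apply Rmult_le_compat_l; lra. }
  assert (h1 : (2 * eps - dl) * (Ee * (1 + - eta * t)) <= (2 * eps - dl) * (Ee * exp (- eta * t))).
  { apply Rmult_le_compat_l; [unfold dl in *; lra|]. apply Rmult_le_compat_l; lra. }
  assert (h2 : dl * Ee * (1 - eta * t) <= dl).
  { destruct (Rle_or_lt 0 (1 - eta * t)).
    - assert (Ee * (1 - eta * t) <= 1) by nra. nra.
    - assert (dl * Ee * (1 - eta * t) < 0).
      { assert (0 < dl * Ee) by nra. nra. }
      lra. }
  assert (h3 : (2 * eps - dl) * (Ee * (1 + - eta * t)) = B - B * eta * t - dl * Ee * (1 - eta * t)).
  { unfold B. ring. }
  unfold dl in *. unfold g in *. lra.
Qed.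

Lemma deriv_cont_within (D : R -> Prop) f x l : deriv_within D f x l -> cont_within D f x.
Proof.
  intros H. apply ed_within. intros e he. destruct (deriv_cont D f x l H e he) as [d [hd Hd]].
  exists d; split; auto.
Qed.

Theorem proposition2p5 (gamma eps L T Rinf : R)
  (F1 F2 G1 G2 init1 init2 : R -> R) (n1 n2 : R -> R -> R) :
  1 < gamma -> 0 < eps -> 0 < L -> 0 < T ->
  feasible F1 F2 G1 G2 ->
  (forall x, 0 <= init1 x) -> (forall x, 0 <= init2 x) ->
  (forall x, ~ (-L < x < L) -> init1 x = 0 /\ init2 x = 0) ->
  reg_solution gamma eps L T F1 F2 G1 G2 init1 init2 n1 n2 ->
  0 < Rinf ->
  (forall t x, 0 < t < T -> -L < x < L ->
     Rabs (Rgrowth gamma F1 F2 G1 G2 n1 n2 t x) <= Rinf) ->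
  forall t x, 0 < t <= T -> -L < x < L ->
    2 * eps * exp (- Rinf * t) <= ntot n1 n2 t x /\
    0 < 2 * eps * exp (- Rinf * t).
Proof.
  intros hg he hL hT hfeas hi1 hi2 _ hsol hR hRb t x ht hx.
  split; [|pose proof (exp_pos (- Rinf * t)); nra].
  destruct hfeas as [F1' [F2' [G1' [G2' [[dF1 _] [[dF2 _] [[dG1 _] [[dG2 _] _]]]]]]]].
  assert (cF1 : forall p, 0 <= p -> cont_within Defs.nonneg F1 p)
    by (intros p hp; eapply deriv_cont_within; apply dF1; auto).
  assert (cF2 : forall p, 0 <= p -> cont_within Defs.nonneg F2 p)
    by (intros p hp; eapply deriv_cont_within; apply dF2; auto).
  assert (cG1 : forall p, 0 <= p -> cont_within Defs.nonneg G1 p)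
    by (intros p hp; eapply deriv_cont_within; apply dG1; auto).
  assert (cG2 : forall p, 0 <= p -> cont_within Defs.nonneg G2 p)
    by (intros p hp; eapply deriv_cont_within; apply dG2; auto).
  unfold reg_solution in hsol. cbv zeta in hsol.
  destruct hsol as [Hcont [_ [Hinit [Hneu [dt [q1 [q2 Htot]]]]]]].
  set (N := fun s y => ntot n1 n2 s y).
  assert (HC : forall t x, 0 <= t <= T -> -L <= x <= L -> forall e, 0 < e -> exists d, 0 < d /\
     forall s y, 0 <= s <= T -> -L <= y <= L -> Rabs (s - t) < d -> Rabs (y - x) < d ->
     Rabs (N s y - N t x) < e).
  { intros t0 x0 ht0 hx0 e hee. destruct (Hcont t0 x0 ht0 hx0) as [c1 c2].
    destruct (within2_ed _ _ _ _ _ c1 (e / 2)) as [d1 [hd1 H1]]; [lra|].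
    destruct (within2_ed _ _ _ _ _ c2 (e / 2)) as [d2 [hd2 H2]]; [lra|].
    exists (Rmin d1 d2). split; [apply Rmin_pos; auto|].
    intros s y hs hy h1 h2.
    pose proof (Rmin_l d1 d2). pose proof (Rmin_r d1 d2).
    specialize (H1 s y (conj hs hy) ltac:(lra) ltac:(lra)).
    specialize (H2 s y (conj hs hy) ltac:(lra) ltac:(lra)). simpl in H1, H2.
    unfold N, ntot.
    replace (n1 s y + n2 s y - (n1 t0 x0 + n2 t0 x0)) with ((n1 s y - n1 t0 x0) + (n2 s y - n2 t0 x0)) by ring.
    eapply Rle_lt_trans; [apply Rabs_triang|]. lra. }
  assert (HI : forall x, -L <= x <= L -> 2 * eps <= N 0 x).
  { intros x0 hx0. destruct (Hinit x0 hx0) as [e1 e2]. unfold N, ntot. rewrite e1, e2.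
    specialize (hi1 x0); specialize (hi2 x0). lra. }
  assert (HD : forall t1, t1 < T -> forall tau x0, 0 < tau <= t1 -> -L <= x0 <= L -> 0 < N tau x0 ->
     (forall y, -L <= y <= L -> N tau x0 <= N tau y) ->
     exists dt, deriv_within (fun t => 0 <= t <= T) (fun s => N s x0) tau dt /\
       - Rinf * N tau x0 <= dt).
  { intros t1 ht1 tau x0 htau hx0 hN hmin.
    destruct (Htot tau x0 ltac:(lra) hx0) as [hdt [hq1 [hq2 hpde]]].
    exists (dt tau x0). split; [exact hdt|].
    assert (hq2pos : 0 <= q2 tau x0).
    { apply (spatial_q2 L (fun y => N tau y) (q1 tau) (gamma + 1) x0 (q2 tau x0)); auto; try lra.
      - intros y hy. exact (proj1 (proj2 (Htot tau y ltac:(lra) hy))).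
      - exact (proj1 (Hneu tau ltac:(lra))).
      - exact (proj2 (Hneu tau ltac:(lra))). }
    assert (hcu : forall (n : R -> R -> R),
       filterlim (fun z : R * R => n (fst z) (snd z))
         (within (fun z : R * R => (0 <= fst z <= T) /\ (-L <= snd z <= L)) (locally (tau, x0)))
         (locally (n tau x0)) ->
       filterlim (n tau) (within (fun y => -L <= y <= L) (locally x0)) (locally (n tau x0))).
    { intros n hn. apply ed_within. intros e hee.
      destruct (within2_ed _ _ _ _ _ hn e hee) as [d [hd Hd]].
      exists d. split; auto. intros y hy hyd.
      apply (Hd tau y); simpl; [split; [lra|auto]| |auto].
      replace (tau - tau) with 0 by ring. rewrite Rabs_R0; lra. }
    destruct (Hcont tau x0 ltac:(lra) hx0) as [c1 c2].
    assert (hRx : Rabs (Rgrowth gamma F1 F2 G1 G2 n1 n2 tau x0) <= Rinf).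
    { exact (R_bound_closure gamma F1 F2 G1 G2 (n1 tau) (n2 tau) L Rinf x0 hL hx0
               (hcu n1 c1) (hcu n2 c2) hN cF1 cF2 cG1 cG2
               (fun y hy => hRb tau y ltac:(lra) hy)). }
    apply Rabs_le_between in hRx.
    rewrite hpde.
    assert (0 <= gamma / (gamma + 1) * q2 tau x0).
    { apply Rmult_le_pos; auto. apply Rlt_le, Rdiv_lt_0_compat; lra. }
    unfold N in *. nra. }
  assert (Hlt : forall t, 0 < t < T -> forall x, -L <= x <= L -> 2 * eps * exp (- Rinf * t) <= N t x).
  { intros t1 ht1 x0 hx0. apply lim_kc; auto; [lra|]. intros k c hk hc.
    apply (main_abstract N L T Rinf k c eps t1); auto; try lra.
    apply HD; lra. }
  destruct (Rlt_or_le t T) as [htT|htT].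
  - apply (Hlt t ltac:(lra) x ltac:(lra)).
  - assert (t = T) by lra. subst t.
    destruct (Rle_or_lt (2 * eps * exp (- Rinf * T)) (N T x)) as [|hlt]; auto. exfalso.
    destruct (HC T x ltac:(lra) ltac:(lra) (2 * eps * exp (- Rinf * T) - N T x)) as [d [hd Hd]]; [lra|].
    set (s := T - Rmin d T / 2).
    assert (0 < Rmin d T) by (apply Rmin_pos; lra).
    pose proof (Rmin_l d T). pose proof (Rmin_r d T).
    assert (h1 := Hd s x ltac:(unfold s; lra) ltac:(lra) ltac:(unfold s; rewrite Rabs_left; lra)
                     ltac:(replace (x - x) with 0 by ring; rewrite Rabs_R0; lra)).
    apply Rabs_lt_between in h1.
    assert (h2 := Hlt s ltac:(unfold s; lra) x ltac:(lra)).
    assert (exp (- Rinf * T) <= exp (- Rinf * s)) by (apply exp_mono; unfold s; nra).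
    unfold N in *. nra.
Qed.
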